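(* Let $E$ be a finite set and let $\underline{I}=(I_\omega)_{\omega\in E}$ be a family of non-empty finite sets. Let $\mathrm{CC}(\underline{I})$ denote the set of causally complete spaces of input histories $\Theta$ with $E^\Theta=E$ and $I^\Theta_\omega=I_\omega$ for all $\omega\in E$, partially ordered by $\Theta'\le\Theta$ iff $\mathrm{Ext}(\Theta')\supseteq\mathrm{Ext}(\Theta)$. Then the maximal elements of $\mathrm{CC}(\underline{I})$ are exactly the causal switch spaces $\mathrm{CSwitch}(\underline{I})$.
   Context: A partial function on a family $(Y_x)_{x\in X}$ is a function $f$ with domain $\mathrm{dom}(f)\subseteq X$ and $f(x)\in Y_x$ for $x\in\mathrm{dom}(f)$; partial functions are ordered by restriction: $f\le g$ iff $\mathrm{dom}(f)\subseteq\mathrm{dom}(g)$ and $g|_{\mathrm{dom}(f)}=f$. Two partial functions are compatible if they agree on the intersection of their domains; a set $\mathcal F$ of partial functions is compatible if pairwise compatible, and then its join $\bigvee\mathcal F$ is the partial function with domain $\bigcup_{f\in\mathcal F}\mathrm{dom}(f)$ extending every $f\in\mathcal F$. A set $\Theta$ of partial functions is $\vee$-prime if for every compatible $\mathcal F\subseteq\Theta$ with $\bigvee\mathcal F\in\Theta$ we have $\bigvee\mathcal F\in\mathcal F$. A space of input histories is a finite $\vee$-prime set $\Theta$ of partial functions; its event set is $E^\Theta=\bigcup_{h\in\Theta}\mathrm{dom}(h)$ and its input sets are $I^\Theta_\omega=\{h(\omega):h\in\Theta,\ \omega\in\mathrm{dom}(h)\}$. Its extended input histories are $\mathrm{Ext}(\Theta)=\{\bigvee\mathcal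 F:\ \emptyset\neq\mathcal F\subseteq\Theta \text{ compatible}\}$, ordered by restriction. $\Theta$ satisfies the free-choice condition if the maximal elements of $\mathrm{Ext}(\Theta)$ are exactly the total functions in $\prod_{\omega\in E^\Theta}I^\Theta_\omega$. For $h\in\mathrm{Ext}(\Theta)$, $\mathrm{tips}_\Theta(h)=\mathrm{dom}(h)\setminus\bigcup\{\mathrm{dom}(k):k\in\mathrm{Ext}(\Theta),\ k<h\}$. $\Theta$ is causally complete if it satisfies the free-choice condition and $|\mathrm{tips}_\Theta(h)|=1$ for all $h\in\Theta$. Conditional sequential composition: given a space $\Theta$ and a family $(\Theta'_k)_{k\in\max\mathrm{Ext}(\Theta)}$ of spaces with $E^\Theta\cap E^{\Theta'_k}=\emptyset$, define $\Theta\rightsquigarrow(\Theta'_k)_k=\Theta\cup\{k\vee h':k\in\max\mathrm{Ext}(\Theta),\ h'\in\Theta'_k\}$. Causal switch spaces are defined by induction on $|E|$: if $E=\emptyset$, the only switch space is the empty space; otherwise $\mathrm{CSwitch}(\underline{I})$ is the set of all spaces $\Theta_{\omega_1}\rightsquigarrow(\Theta'_{i})_{i\in I_{\omega_1}}$ where $\omega_1\in E$, $\Theta_{\omega_1}=\{\{\omega_1\mapsto i\}:i\in I_{\omega_1}\}$ (whose maximal extended histories $\{\omega_1\mapsto i\}$ are identified with $i\in I_{\omega_1}$), and each $\Theta'_i\in\mathrm{CSwitch}((I_\omega)_{\omega\in E\setminus\{\omega_1\}})$. *)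

(* Defs.v *)
From mathcomp Require Import all_boot.
Set Implicit Arguments.
Unset Strict Implicit.
Unset Printing Implicit Defensive.

Section Histories.
Variables (E T : finType).

(* A partial function on the family (T)_{x in E}: None = undefined. *)
Definition pfun := {ffun E -> option T}.

Definition dom (f : pfun) : {set E} := [set x | f x != None].

Definition ple (f g : pfun) : bool :=
  [forall x, (f x != None) ==> (g x == f x)].
Definition plt (f g : pfun) : bool := ple f g && (f != g).

Definition pcompat (f g : pfun) : bool :=
  [forall x, ((f x != None) && (g x != None)) ==> (f x == g x)].

Definition compatible (F : {set pfun}) : bool :=
  [forall f in F, forall g in F, pcompat f g].

Definition is_join (F : {set pfun}) (h : pfun) : bool :=
  [forall x, (h x != None) == [exists f in F, f x != None]] &&
  [forall f in F, ple f h].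

Definition vee_prime (Th : {set pfun}) : Prop :=
  forall (F : {set pfun}) (h : pfun),
    F \subset Th -> compatible F -> is_join F h -> h \in Th -> h \in F.

(* A space of input histories (finiteness is automatic). *)
Definition space (Th : {set pfun}) : Prop := vee_prime Th.

Definition events (Th : {set pfun}) : {set E} :=
  [set x | [exists h in Th, h x != None]].

Definition inputs (Th : {set pfun}) (x : E) : {set T} :=
  [set v | [exists h in Th, h x == Some v]].

Definition Ext (Th : {set pfun}) : {set pfun} :=
  [set h | [exists F : {set pfun},
             [&& F \subset Th, F != set0, compatible F & is_join F h]]].

Definition maxExt (Th : {set pfun}) : {set pfun} :=
  [set h in Ext Th | [forall k in Ext Th, ple h k ==> (k == h)]].

Definition totals (Th : {set pfun}) : {set pfun} :=
  [set h : pfun | [forall x,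
     if x \in events Th then
       (if h x is Some v then v \in inputs Th x else false)
     else h x == None]].

Definition free_choice (Th : {set pfun}) : Prop := maxExt Th = totals Th.

Definition tips (Th : {set pfun}) (h : pfun) : {set E} :=
  [set x | (h x != None) && ~~ [exists k in Ext Th, plt k h && (k x != None)]].

Definition causally_complete (Th : {set pfun}) : Prop :=
  free_choice Th /\ forall h, h \in Th -> #|tips Th h| = 1.

Variable I : E -> {set T}.

Definition CC (Th : {set pfun}) : Prop :=
  [/\ space Th, causally_complete Th, events Th = [set: E]
    & forall w, inputs Th w = I w].

Definition cc_le (Th' Th : {set pfun}) : Prop := Ext Th \subset Ext Th'.

Definition maximal_CC (Th : {set pfun}) : Prop :=
  CC Th /\ forall Th', CC Th' -> cc_le Th Th' -> cc_le Th' Th.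

Definition single (w : E) (i : T) : pfun :=
  [ffun x => if x == w then Some i else None].

Definition pjoin2 (f g : pfun) : pfun :=
  [ffun x => if f x is Some v then Some v else g x].

Definition cseq (w : E) (Th' : T -> {set pfun}) : {set pfun} :=
  [set single w i | i in I w] :|:
  [set pjoin2 (single w i) h' | i in I w, h' in Th' i].

(* cswitch D Th : Th is a causal switch space on the subfamily (I w)_{w in D} *)
Inductive cswitch : {set E} -> {set pfun} -> Prop :=
| cswitch_nil : cswitch set0 set0
| cswitch_cons (D : {set E}) (w : E) (Th' : T -> {set pfun}) :
    w \in D ->
    (forall i, i \in I w -> cswitch (D :\ w) (Th' i)) ->
    cswitch D (cseq w Th').

End Histories.

(* Main.v *)
Require Import Defs.
From mathcomp Require Import all_boot.
From Stdlib Require Import IndefiniteDescription.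
Set Implicit Arguments.
Unset Strict Implicit.
Unset Printing Implicit Defensive.

Section Proofs.
Variables (E T : finType).
Local Notation pf := (pfun E T).

Definition pempty : pf := [ffun _ => None].

Lemma pleP (f g : pf) : reflect (forall x v, f x = Some v -> g x = Some v) (ple f g).
Proof.
apply: (iffP forallP) => H x.
  move=> v fx; move: (H x); rewrite fx /= => /eqP ->; done.
case fx: (f x) => [v|] //=; by rewrite (H _ _ fx).
Qed.

Lemma ple_refl (f : pf) : ple f f.
Proof. by apply/pleP. Qed.

Lemma ple_trans (f g h : pf) : ple f g -> ple g h -> ple f h.
Proof. move=> /pleP H1 /pleP H2; apply/pleP => x v /H1 /H2 //. Qed.

Lemma ple_dom (f g : pf) x : ple f g -> f x != None -> g x != None.
Proof. move=> /pleP H; case fx: (f x) => [v|] //= _; by rewrite (H _ _ fx). Qed.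

Lemma ple_eq (f g : pf) : ple f g -> (forall x, g x != None -> f x != None) -> f = g.
Proof.
move=> /pleP H1 H2; apply/ffunP => x.
case fx: (f x) => [v|]; first by rewrite (H1 _ _ fx).
case gx: (g x) => [v|] //; have := H2 x; rewrite gx fx; by move/(_ isT).
Qed.

Lemma domE (f : pf) x : (x \in dom f) = (f x != None).
Proof. by rewrite inE. Qed.

Lemma ple_dom_sub (f g : pf) : ple f g -> dom f \subset dom g.
Proof. move=> H; apply/subsetP => x; rewrite !domE; exact: ple_dom. Qed.

Lemma ple_card (f g : pf) : ple f g -> #|dom g| <= #|dom f| -> f = g.
Proof.
move=> H Hc; have Hs := ple_dom_sub H.
have /eqP Heq: dom f == dom g by rewrite eqEcard Hs Hc.
apply: ple_eq H _ => x; by rewrite -!domE Heq.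
Qed.

Lemma plt_card (f g : pf) : ple f g -> f != g -> #|dom f| < #|dom g|.
Proof.
move=> H Hn; rewrite ltnNge; apply/negP => Hc; by rewrite (ple_card H Hc) eqxx in Hn.
Qed.

Lemma pcompatP (f g : pf) :
  reflect (forall x u v, f x = Some u -> g x = Some v -> u = v) (pcompat f g).
Proof.
apply: (iffP forallP) => H x.
  move=> u v fx gx; move: (H x); rewrite fx gx /= => /eqP [] //.
case fx: (f x) => [u|] //=; case gx: (g x) => [v|] //=; by rewrite (H _ _ _ fx gx).
Qed.

Lemma ple_compat (f g t : pf) : ple f t -> ple g t -> pcompat f g.
Proof.
move=> /pleP H1 /pleP H2; apply/pcompatP => x u v /H1 fx /H2; rewrite fx; by case.
Qed.

Lemma pjoin2E (f g : pf) x : pjoin2 f g x = if f x is Some v then Some v else g x.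
Proof. by rewrite ffunE. Qed.

Lemma singleE (w : E) (i : T) (x : E) : single w i x = if x == w then Some i else None :> option T.
Proof. by rewrite ffunE. Qed.

Lemma pjoin2A (a b c : pf) : pjoin2 a (pjoin2 b c) = pjoin2 (pjoin2 a b) c.
Proof. apply/ffunP => x; rewrite !pjoin2E; by case: (a x). Qed.

Lemma pjoin2_empty (f : pf) : pjoin2 pempty f = f.
Proof. apply/ffunP => x; by rewrite pjoin2E ffunE. Qed.

Lemma ple_join2l (f g : pf) : ple f (pjoin2 f g).
Proof. apply/pleP => x v fx; by rewrite pjoin2E fx. Qed.

Lemma ple_join2r (f g : pf) : pcompat f g -> ple g (pjoin2 f g).
Proof.
move=> /pcompatP H; apply/pleP => x v gx; rewrite pjoin2E.
case fx: (f x) => [u|] //; by rewrite (H _ _ _ fx gx).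
Qed.

Lemma ple_join2_mono (s f g : pf) : ple f g -> ple (pjoin2 s f) (pjoin2 s g).
Proof.
move=> /pleP H; apply/pleP => x v; rewrite !pjoin2E; case: (s x) => // fx; exact: H.
Qed.

Lemma is_joinP (F : {set pf}) h : is_join F h ->
  (forall x, (h x != None) = [exists f in F, f x != None]) /\ (forall f, f \in F -> ple f h).
Proof.
case/andP => /forallP H1 /forall_inP H2; split; [move=> x; move: (H1 x); by move/eqP | move=> f fF; exact: H2].
Qed.

Lemma join_max (F : {set pf}) m h :
  m \in F -> (forall f, f \in F -> ple f m) -> is_join F h -> h = m.
Proof.
move=> mF Hm /is_joinP [H1 H2]; symmetry; apply: ple_eq (H2 _ mF) _ => x.
rewrite H1 => /exists_inP [f fF fx]; exact: ple_dom (Hm _ fF) fx.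
Qed.

Lemma ExtP (Th : {set pf}) (h : pf) : reflect
  (exists F : {set pf}, [/\ F \subset Th, F != set0, compatible F & is_join F h]) (h \in Ext Th).
Proof.
rewrite inE; apply: (iffP existsP) => [[F /and4P [? ? ? ?]]|[F [? ? ? ?]]];
  exists F => //; by apply/and4P.
Qed.

Lemma compatibleP (F : {set pf}) :
  reflect (forall f g, f \in F -> g \in F -> pcompat f g) (compatible F).
Proof.
apply: (iffP forall_inP) => H.
  move=> f g fF gF; exact: (forall_inP (H f fF) g gF).
move=> f fF; apply/forall_inP => g gF; exact: H.
Qed.

Lemma Ext_self (Th : {set pf}) h : h \in Th -> h \in Ext Th.
Proof.
move=> hT; apply/ExtP; exists [set h]; split.
- by rewrite sub1set.
- by apply/set0Pn; exists h; rewrite inE.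
- apply/compatibleP => f g; rewrite !inE => /eqP -> /eqP ->; exact: ple_compat (ple_refl h) (ple_refl h).
- apply/andP; split.
  + apply/forallP => x; apply/eqP; apply/idP/exists_inP => [hx|[f]].
      by exists h; rewrite ?inE.
    by rewrite inE => /eqP ->.
  + apply/forall_inP => f; rewrite inE => /eqP ->; exact: ple_refl.
Qed.

Lemma Ext_join2 (Th : {set pf}) a b :
  a \in Ext Th -> b \in Ext Th -> pcompat a b -> pjoin2 a b \in Ext Th.
Proof.
move=> /ExtP [Fa [sa na ca ja]] /ExtP [Fb [sb nb cb jb]] cab.
have [Ja1 Ja2] := is_joinP ja; have [Jb1 Jb2] := is_joinP jb.
have hle : forall f, f \in Fa :|: Fb -> ple f (pjoin2 a b).
  move=> f; rewrite inE => /orP [fa|fb].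
    exact: ple_trans (Ja2 _ fa) (ple_join2l _ _).
  exact: ple_trans (Jb2 _ fb) (ple_join2r cab).
apply/ExtP; exists (Fa :|: Fb); split.
- by rewrite subUset sa sb.
- apply/set0Pn; case/set0Pn: na => f fa; exists f; by rewrite inE fa.
- apply/compatibleP => f g fF gF; exact: ple_compat (hle _ fF) (hle _ gF).
- apply/andP; split; last by apply/forall_inP.
  apply/forallP => x; apply/eqP; rewrite pjoin2E.
  apply/idP/exists_inP => [|[f]].
    case ax: (a x) => [u|] /=.
      have: a x != None by rewrite ax.
      rewrite Ja1 => /exists_inP [f fa fx]; exists f => //; by rewrite inE fa.
    rewrite Jb1 => /exists_inP [f fb fx]; exists f => //; by rewrite inE fb orbT.
  move=> fF fx; have := ple_dom (hle _ fF) fx; by rewrite pjoin2E.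
Qed.


Variable I : E -> {set T}.
Hypothesis I_ne : forall w, I w != set0.

Lemma cseq_inv w (Th' : T -> {set pf}) (h : pf) : h \in cseq I w Th' ->
  (exists2 i, i \in I w & h = single w i) \/
  (exists i h', [/\ i \in I w, h' \in Th' i & h = pjoin2 (single w i) h']).
Proof.
rewrite inE => /orP [/imsetP [i Hi ->]|/imset2P [i h' Hi Hh ->]].
  by left; exists i.
by right; exists i, h'.
Qed.

Lemma cseq_single w (Th' : T -> {set pf}) i : i \in I w -> single w i \in cseq I w Th'.
Proof. move=> Hi; rewrite inE; apply/orP; left; exact: imset_f. Qed.

Lemma cseq_join w (Th' : T -> {set pf}) i h' : i \in I w -> h' \in Th' i ->
  pjoin2 (single w i) h' \in cseq I w Th'.
Proof. move=> Hi Hh; rewrite inE; apply/orP; right; apply/imset2P; by exists i h'. Qed.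

Lemma pjs_at w i (h : pf) : pjoin2 (single w i) h w = Some i.
Proof. by rewrite pjoin2E singleE eqxx. Qed.

Lemma pjs_out w i (h : pf) x : x != w -> pjoin2 (single w i) h x = h x.
Proof. by move=> /negbTE H; rewrite pjoin2E singleE H. Qed.

Definition sw_basic (D : {set E}) (S : {set pf}) :=
  forall h, h \in S -> [/\ exists x, h x != None,
    forall x, h x != None -> x \in D & forall x v, h x = Some v -> v \in I x].

Lemma sw_basicP D S : cswitch I D S -> sw_basic D S.
Proof.
elim=> {D S} [|D w Th' wD _ IH] h; first by rewrite inE.
case/cseq_inv => [[i Hi ->]|[i [h' [Hi Hh ->]]]].
  split.
  - by exists w; rewrite singleE eqxx.
  - by move=> x; rewrite singleE; case: (eqVneq x w) => [->|].
  - by move=> x v; rewrite singleE; case: (eqVneq x w) => [-> [<-]|].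
have [[y hy] Hd Hv] := IH i Hi h' Hh.
split.
- by exists w; rewrite pjs_at.
- move=> x; case: (eqVneq x w) => [->|xw] //; rewrite pjs_out // => /Hd.
  by rewrite inE => /andP [].
- move=> x v; case: (eqVneq x w) => [->|xw]; first by rewrite pjs_at => [[<-]].
  rewrite pjs_out //; exact: Hv.
Qed.

Lemma sw_notw D w (S : {set pf}) h : sw_basic (D :\ w) S -> h \in S -> h w = None.
Proof.
move=> B hS; have [_ Hd _] := B h hS; case hw: (h w) => [v|] //.
have := Hd w; rewrite hw !inE eqxx /=; by move/(_ isT).
Qed.

Definition sw_chain (S : {set pf}) :=
  forall h k, h \in S -> k \in S -> pcompat h k -> ple h k || ple k h.

Lemma sw_chainP D S : cswitch I D S -> sw_chain S.
Proof.
elim=> {D S} [|D w Th' wD HTh IH] h k; first by rewrite inE.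
have Hc: forall i j (a b : pf), pcompat (pjoin2 (single w i) a) (pjoin2 (single w j) b) -> i = j.
  move=> i j a b /pcompatP H; have := H w i j; rewrite !pjs_at; by apply.
case/cseq_inv => [[i Hi ->]|[i [h' [Hi Hh ->]]]];
case/cseq_inv => [[j Hj ->]|[j [k' [Hj Hk ->]]]] Hcp.
- have Hij: i = j.
    move/pcompatP: Hcp => H; apply: (H w); by rewrite singleE eqxx.
  by rewrite Hij ple_refl.
- have Hij: i = j.
    move/pcompatP: Hcp => H; apply: (H w); by rewrite ?singleE ?pjs_at ?eqxx.
  by rewrite Hij ple_join2l.
- have Hij: i = j.
    move/pcompatP: Hcp => H; apply: (H w); by rewrite ?singleE ?pjs_at ?eqxx.
  by rewrite Hij ple_join2l orbT.
- have Hij := Hc _ _ _ _ Hcp; subst j.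
  have Bi := sw_basicP (HTh i Hi).
  have Hc': pcompat h' k'.
    apply/pcompatP => x u v hx kx; move/pcompatP: Hcp => H; apply: (H x).
      rewrite pjs_out //; apply/eqP => xw; subst x; by rewrite (sw_notw Bi Hh) in hx.
    rewrite pjs_out //; apply/eqP => xw; subst x; by rewrite (sw_notw Bi Hk) in kx.
  by case/orP: (IH i Hi h' k' Hh Hk Hc') => H; apply/orP; [left|right]; exact: ple_join2_mono.
Qed.

Lemma chain_join (S F : {set pf}) h : sw_chain S -> F \subset S -> F != set0 ->
  compatible F -> is_join F h -> h \in F.
Proof.
move=> Hch sFS /set0Pn [f0 f0F] /compatibleP cF J.
case: (@arg_maxnP _ f0 (fun m => m \in F) (fun m => #|dom m|) f0F) => m mF Hm.
suff ->: h = m by [].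
apply: (join_max mF _ J) => f fF.
case/orP: (Hch f m (subsetP sFS _ fF) (subsetP sFS _ mF) (cF _ _ fF mF)) => // H.
by rewrite (ple_card H (Hm _ fF)) ple_refl.
Qed.

Lemma Ext_sw D S : cswitch I D S -> Ext S = S.
Proof.
move=> HS; apply/setP => h; apply/idP/idP; last exact: Ext_self.
case/ExtP => F [sFS nF cF J]; apply: (subsetP sFS); exact: chain_join (sw_chainP HS) sFS nF cF J.
Qed.


Lemma sw_total D S : cswitch I D S -> forall t : pf,
  (forall x, (t x != None) = (x \in D)) -> (forall x v, t x = Some v -> v \in I x) ->
  t = pempty \/ t \in S.
Proof.
elim=> {D S} [|D w Th' wD HTh IH] t Hd Hv.
  left; apply/ffunP => x; rewrite ffunE; have := Hd x; rewrite inE; by case: (t x).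
have: t w != None by rewrite Hd.
case tw: (t w) => [i|] // _; have Hi := Hv _ _ tw.
pose t' : pf := [ffun x => if x == w then None else t x].
have Hd': forall x, (t' x != None) = (x \in D :\ w).
  move=> x; rewrite ffunE !inE; case: (eqVneq x w) => //= _; exact: Hd.
have Hv': forall x v, t' x = Some v -> v \in I x.
  move=> x v; rewrite ffunE; case: eqVneq => // _; exact: Hv.
right; case: (IH i Hi t' Hd' Hv') => [E0|Ht'].
  suff ->: t = single w i by exact: cseq_single.
  apply/ffunP => x; rewrite singleE; case: eqVneq => [->|xw] //.
  have: t' x = None by rewrite E0 ffunE.
  by rewrite ffunE (negbTE xw).
suff ->: t = pjoin2 (single w i) t' by exact: cseq_join.
apply/ffunP => x; case: (eqVneq x w) => [->|xw]; first by rewrite pjs_at.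
by rewrite pjs_out // ffunE (negbTE xw).
Qed.

Lemma pjs_inj w i (a b : pf) : a w = None -> b w = None ->
  pjoin2 (single w i) a = pjoin2 (single w i) b -> a = b.
Proof.
move=> Ha Hb E0; apply/ffunP => z; case: (eqVneq z w) => [->|zw]; first by rewrite Ha Hb.
by rewrite -(pjs_out i a zw) E0 pjs_out.
Qed.

Lemma sw_ne D w (S : {set pf}) a : sw_basic (D :\ w) S -> a \in S ->
  exists2 y, y != w & a y != None.
Proof.
move=> B aS; have [[y ay] _ _] := B a aS; exists y => //.
apply/eqP => yw; subst y; by rewrite (sw_notw B aS) in ay.
Qed.

Lemma sw_tips D S : cswitch I D S -> forall h, h \in S -> exists y, tips S h = [set y].
Proof.
move=> HS0; have HS := HS0.
elim: HS0 HS => {D S} [|D w Th' wD HTh IH] HS h; first by rewrite inE.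
case/cseq_inv => [[i Hi ->]|[i [a [Hi Ha ->]]]].
  exists w; apply/setP => x; rewrite /tips (Ext_sw HS) !inE singleE.
  case: (eqVneq x w) => [->|xw] //=.
  apply/exists_inP => [[k kS /andP [/andP [kle kne] kw]]].
  have kE: k = single w i.
    apply: ple_eq kle _ => z; rewrite singleE; by case: (eqVneq z w) => [->|].
  by rewrite kE eqxx in kne.
have Bi := sw_basicP (HTh i Hi).
have [y Hy] := IH i Hi (HTh i Hi) a Ha.
exists y; apply/setP => x; rewrite -Hy /tips (Ext_sw HS) (Ext_sw (HTh i Hi)) !inE.
case: (eqVneq x w) => [->|xw].
  rewrite pjs_at (sw_notw Bi Ha) /=.
  apply/negbF/exists_inP; exists (single w i); first exact: cseq_single.
  rewrite singleE eqxx andbT /plt ple_join2l /=.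
  have [y' y'w ay'] := sw_ne Bi Ha.
  apply/eqP => /ffunP /(_ y'); rewrite singleE pjs_out // (negbTE y'w) => E0.
  by rewrite -E0 in ay'.
rewrite pjs_out //; case ax: (a x) => [u|] //=; congr (~~ _).
apply/exists_inP/exists_inP.
  move=> [k kS /andP [/andP [kle kne] kx]].
  case/cseq_inv: kS => [[j Hj kE]|[j [b [Hj Hb kE]]]].
    by rewrite kE singleE (negbTE xw) in kx.
  have Bj := sw_basicP (HTh j Hj).
  have Hij: j = i.
    move/pleP: kle => /(_ w j); rewrite kE !pjs_at; by move/(_ erefl) => [].
  subst j; exists b => //.
  rewrite kE pjs_out // in kx; rewrite kx andbT; apply/andP; split.
    apply/pleP => z v bz; have zw: z != w.
      by apply/eqP => zw; subst z; rewrite (sw_notw Bj Hb) in bz.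
    move/pleP: kle => /(_ z v); rewrite kE !pjs_out //; by apply.
  by apply: contraNneq kne => E1; rewrite kE E1.
move=> [k kS /andP [/andP [kle kne] kx]].
exists (pjoin2 (single w i) k); first exact: cseq_join.
rewrite pjs_out // kx andbT /plt ple_join2_mono //=.
apply: contra kne => /eqP E0; apply/eqP; exact: pjs_inj (sw_notw Bi kS) (sw_notw Bi Ha) E0.
Qed.

Lemma sw_case D S : cswitch I D S -> (D = set0 /\ S = set0) \/
  exists w Th', [/\ w \in D, (forall i, i \in I w -> cswitch I (D :\ w) (Th' i)) & S = cseq I w Th'].
Proof. case=> [|D' w Th' wD HTh]; [by left | right; by exists w, Th']. Qed.

Lemma sw_anti D S1 : cswitch I D S1 -> forall S2, cswitch I D S2 -> S1 \subset S2 -> S1 = S2.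
Proof.
elim=> {D S1} [|D w A wD HA IH] S2 H2 sub.
  case: (sw_case H2) => [[_ ->] //|[w [B [wD _ _]]]]; by rewrite inE in wD.
case: (sw_case H2) => [[D0 _]|[w' [B [w'D HB E2]]]]; first by rewrite D0 inE in wD.
subst S2.
case/set0Pn: (I_ne w) => i0 Hi0.
have ww': w' = w.
  have := subsetP sub _ (@cseq_single w A i0 Hi0) => H0.
  case: (cseq_inv H0) => [[j Hj /ffunP /(_ w)]|[j [b [Hj Hb /ffunP E0]]]].
    rewrite !singleE eqxx; by case: eqVneq.
  have := E0 w'; rewrite pjs_at singleE; by case: eqVneq.
subst w'.
have Heq: forall i, i \in I w -> A i = B i.
  move=> i Hi; apply: (IH i Hi (B i) (HB i Hi)).
  have Bi := sw_basicP (HA i Hi).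
  apply/subsetP => a Ha; have H0 := subsetP sub _ (cseq_join Hi Ha).
  case: (cseq_inv H0) => [[j Hj /ffunP E0]|[j [b [Hj Hb E0]]]].
    have [y yw ay] := sw_ne Bi Ha.
    have := E0 y; rewrite singleE pjs_out // (negbTE yw) => E1.
    by rewrite E1 in ay.
  have Bj := sw_basicP (HB j Hj).
  have Hij: j = i.
    have := congr1 (fun f : pf => f w) E0; rewrite /= !pjs_at; by case.
  subst j; by rewrite (pjs_inj (sw_notw Bi Ha) (sw_notw Bj Hb) E0).
apply/eqP; rewrite eqEsubset sub /=; apply/subsetP => h.
case/cseq_inv => [[i Hi ->]|[i [h' [Hi Hh ->]]]]; first exact: cseq_single.
rewrite -(Heq i Hi) in Hh; exact: cseq_join.
Qed.


Lemma pick_I y : exists2 v, [pick v in I y] = Some v & v \in I y.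
Proof.
case: pickP => [v Hv|H]; first by exists v.
case/set0Pn: (I_ne y) => v Hv; by have := H v; rewrite /= Hv.
Qed.

Lemma sw_CC S : 0 < #|E| -> cswitch I setT S -> CC I S.
Proof.
move=> HE HS.
have B := sw_basicP HS; have Hext := Ext_sw HS.
have Hinp: forall x, inputs S x = I x.
  move=> x; apply/setP => v; rewrite inE; apply/exists_inP/idP.
    move=> [h hS /eqP hx]; have [_ _ Hv] := B h hS; exact: Hv hx.
  move=> Hv; pose t : pf := [ffun y => if y == x then Some v else [pick u in I y]].
  have Ht: forall y, (t y != None) = (y \in setT).
    move=> y; rewrite ffunE in_setT; case: (eqVneq y x) => // _.
    by have [u -> _] := pick_I y.
  have Htv: forall y u, t y = Some u -> u \in I y.
    move=> y u; rewrite ffunE; case: (eqVneq y x) => [-> [<-] //|_].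
    have [u' -> Hu'] := pick_I y; by case=> <-.
  case: (sw_total HS Ht Htv) => [/ffunP /(_ x)|tS]; first by rewrite !ffunE eqxx.
  exists t => //; by rewrite ffunE eqxx.
have Hev: events S = setT.
  apply/setP => x; rewrite !inE.
  have [v _ Hv] := pick_I x; rewrite -(Hinp x) inE in Hv.
  case/exists_inP: Hv => h hS /eqP hx; apply/exists_inP; exists h => //; by rewrite hx.
split => //.
- move=> F h sFS cF J hS; case: (eqVneq F set0) => [F0|nF];
    last exact: chain_join (sw_chainP HS) sFS nF cF J.
  exfalso; have [[y hy] _ _] := B h hS; have [J1 _] := is_joinP J.
  move: hy; rewrite J1 F0; by case/exists_inP => f; rewrite inE.
split.
- rewrite /free_choice /maxExt Hext; apply/setP => h; rewrite !inE.
  apply/andP/forallP.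
    case=> hS /forall_inP Hmax x; rewrite Hev in_setT Hinp.
    pose t : pf := [ffun y => if h y is Some v then Some v else [pick u in I y]].
    have Ht: forall y, (t y != None) = (y \in setT).
      move=> y; rewrite ffunE in_setT; case: (h y) => // .
      by have [u -> _] := pick_I y.
    have Htv: forall y u, t y = Some u -> u \in I y.
      move=> y u; rewrite ffunE; case hy: (h y) => [v|].
        case=> <-; have [_ _ Hv] := B h hS; exact: Hv hy.
      have [u' -> Hu'] := pick_I y; by case=> <-.
    have hle: ple h t by apply/pleP => y v hy; rewrite ffunE hy.
    have tS: t \in S.
      case: (sw_total HS Ht Htv) => // /ffunP /(_ x) E0.
      by have := Ht x; rewrite E0 ffunE in_setT.
    have := Hmax t tS; rewrite hle /= => /eqP Eth.
    rewrite -Eth; case tx: (t x) => [v|]; first exact: Htv tx.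
    by have := Ht x; rewrite tx in_setT.
  move=> Hall.
  have Ht: forall y, (h y != None) = (y \in setT).
    move=> y; have := Hall y; rewrite Hev in_setT; by case: (h y).
  have Htv: forall y u, h y = Some u -> u \in I y.
    move=> y u hy; have := Hall y; by rewrite Hev in_setT Hinp hy.
  have hS: h \in S.
    case: (sw_total HS Ht Htv) => // E0; exfalso.
    case/card_gt0P: HE => x0 _; have := Ht x0; by rewrite E0 ffunE in_setT.
  split => //; apply/forall_inP => k kS; apply/implyP => hk; apply/eqP; symmetry.
  apply: (ple_eq hk) => x _; by rewrite Ht in_setT.
- move=> h hS; have [y ->] := sw_tips HS hS; exact: cards1.
Qed.

Lemma build_sw (Th : {set pf}) : causally_complete Th -> events Th = setT ->
  (forall w, inputs Th w = I w) ->
  forall n (D : {set E}) (c : pf), #|D| = n -> (forall x, (c x != None) = (x \notin D)) ->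
  (forall x v, c x = Some v -> v \in I x) -> (c = pempty \/ c \in Ext Th) ->
  exists S : {set pf}, cswitch I D S /\ forall s, s \in S -> pjoin2 c s \in Ext Th.
Proof.
move=> [FC Tip] Hev Hinp; elim=> [|n IHn] D c HD Hc Hcv Hce.
  have D0: D = set0 by apply/cards0_eq.
  exists set0; rewrite D0; split; [exact: cswitch_nil | by move=> s; rewrite inE].
have Hjc: forall h, h \in Ext Th -> pcompat c h -> pjoin2 c h \in Ext Th.
  move=> h hE chc; case: Hce => [->|cE]; [by rewrite pjoin2_empty | exact: Ext_join2].
have Hcd: forall x, c x = None -> x \in D.
  move=> x cx; have := Hc x; rewrite cx /=; by move/esym/negbFE.
case: (boolP [exists w in D, [forall i in I w, pjoin2 c (single w i) \in Ext Th]]) =>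
  [/exists_inP [w wD /forall_inP Hw]|Hn]; last first.
  exfalso.
  pose t : pf := [ffun x => if c x is Some v then Some v
                            else [pick i in I x | pjoin2 c (single x i) \notin Ext Th]].
  have Hpick: forall x, x \in D -> exists2 i,
      [pick i in I x | pjoin2 c (single x i) \notin Ext Th] = Some i &
      (i \in I x) && (pjoin2 c (single x i) \notin Ext Th).
    move=> x xD; case: pickP => [i Hi|H0]; first by exists i.
    move/exists_inP: Hn; case; exists x => //; apply/forall_inP => i Hi.
    have := H0 i; rewrite /= Hi /=; by move/negbFE.
  have tT: t \in totals Th.
    rewrite inE; apply/forallP => x; rewrite Hev in_setT Hinp ffunE.
    case cx: (c x) => [v|]; first exact: Hcv cx.
    have [i -> /andP [Hi _]] := Hpick x (Hcd x cx); exact Hi.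
  rewrite -FC inE in tT; case/andP: tT => tE _.
  case/ExtP: tE => F [sFT nF cF J]; have [J1 J2] := is_joinP J.
  have: 0 < #|D| by rewrite HD.
  case/card_gt0P => w0 w0D.
  have: t w0 != None.
    rewrite ffunE; case cw: (c w0) => //.
    by have [i -> _] := Hpick w0 w0D.
  rewrite J1 => /exists_inP [f fF fw0].
  pose P := fun h : pf => [&& h \in Th, ple h t & [exists x in D, h x != None]].
  have Pf: P f.
    rewrite /P (subsetP sFT _ fF) (J2 _ fF) /=; apply/exists_inP; by exists w0.
  case: (arg_minnP (fun h => #|dom h|) Pf) => h /and3P [hT hle /exists_inP [y yD hy]] Hmin.
  have Hsub: forall z, z \in D -> h z != None -> z \in tips Th h.
    move=> z zD hz; rewrite inE hz /=; apply/exists_inP => [[k kE /andP [/andP [kle kne] kz]]].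
    case/ExtP: kE => G [sGT nG cG JG]; have [JG1 JG2] := is_joinP JG.
    move: kz; rewrite JG1 => /exists_inP [g gG gz].
    have Pg: P g.
      rewrite /P (subsetP sGT _ gG) (ple_trans (JG2 _ gG) (ple_trans kle hle)) /=.
      apply/exists_inP; by exists z.
    have c3 := Hmin g Pg.
    have c1: #|dom g| <= #|dom k| := subset_leq_card (ple_dom_sub (JG2 _ gG)).
    have c2: #|dom k| < #|dom h| := plt_card kle kne.
    have := leq_trans c3 c1; by rewrite leqNgt c2.
  have /cards1P [x0 Htx] : #|tips Th h| == 1 by rewrite Tip.
  have Huniq: forall z, z \in D -> h z != None -> z = y.
    move=> z zD hz; have := Hsub z zD hz; have := Hsub y yD hy.
    by rewrite Htx !inE => /eqP -> /eqP ->.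
  have cy: c y = None.
    have := Hc y; rewrite yD /=; by case: (c y).
  have [i ti /andP [_ Hni]] := Hpick y yD.
  have ty: t y = Some i by rewrite ffunE cy ti.
  have hyi: h y = Some i.
    move/pleP: hle => hle'; case hy': (h y) => [u|]; last by rewrite hy' in hy.
    by rewrite (hle' _ _ hy') in ty.
  have EQ: pjoin2 c h = pjoin2 c (single y i).
    apply/ffunP => z; rewrite !pjoin2E singleE; case cz: (c z) => [v|] //.
    have zD := Hcd z cz.
    case: (eqVneq z y) => [->|zy]; first exact hyi.
    case hz: (h z) => [u|] //; have := Huniq z zD; rewrite hz => /(_ isT) zy'.
    by rewrite zy' eqxx in zy.
  have hcomp: pcompat c h.
    apply: ple_compat _ hle; apply/pleP => z v cz; by rewrite ffunE cz.
  rewrite -EQ in Hni; by rewrite Hjc ?(Ext_self hT) in Hni.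
have card': #|D :\ w| = n.
  have := cardsD1 w D; rewrite wD HD add1n; by case.
have Hsub: forall i, exists S : {set pf}, i \in I w -> cswitch I (D :\ w) S /\
    forall s, s \in S -> pjoin2 (pjoin2 c (single w i)) s \in Ext Th.
  move=> i; case: (boolP (i \in I w)) => Hi; last by exists set0.
  have H1: forall x, (pjoin2 c (single w i) x != None) = (x \notin D :\ w).
    move=> x; rewrite pjoin2E singleE !inE negb_and negbK; case cx: (c x) => [v|] /=.
      have := Hc x; rewrite cx /= => /esym ->; by rewrite orbT.
    rewrite -(Hc x) cx orbF; by case: (x == w).
  have H2: forall x v, pjoin2 c (single w i) x = Some v -> v \in I x.
    move=> x v; rewrite pjoin2E singleE; case cx: (c x) => [u|].
      move=> [<-]; exact: Hcv cx.
    by case: (eqVneq x w) => [-> [<-] | _ //].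
  have [S HS] := IHn (D :\ w) (pjoin2 c (single w i)) card' H1 H2 (or_intror (Hw i Hi)).
  by exists S.
pose Th' := fun i => proj1_sig (constructive_indefinite_description _ (Hsub i)).
have HTh': forall i, i \in I w -> cswitch I (D :\ w) (Th' i) /\
    forall s, s \in Th' i -> pjoin2 (pjoin2 c (single w i)) s \in Ext Th.
  move=> i Hi; exact: (proj2_sig (constructive_indefinite_description _ (Hsub i)) Hi).
exists (cseq I w Th'); split.
  apply: (cswitch_cons wD) => i Hi; exact: (HTh' i Hi).1.
move=> s /cseq_inv [[i Hi ->]|[i [h' [Hi Hh ->]]]]; first exact: Hw.
rewrite pjoin2A; exact: (HTh' i Hi).2 _ Hh.
Qed.

Lemma main_sec (HE : 0 < #|E|) (Th : {set pf}) : maximal_CC I Th <-> cswitch I setT Th.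
Proof.
have Bld: forall Th : {set pf}, CC I Th -> exists S : {set pf}, cswitch I setT S /\ S \subset Ext Th.
  move=> Th0 [_ CCc Hev Hinp].
  have := @build_sw Th0 CCc Hev Hinp _ setT pempty erefl.
  case.
  - by move=> x; rewrite ffunE in_setT.
  - by move=> x v; rewrite ffunE.
  - by left.
  move=> S [HS HSE]; exists S; split => //; apply/subsetP => s sS.
  have := HSE s sS; by rewrite pjoin2_empty.
split.
  move=> [CCT Hmax]; have [S [HS sub]] := Bld Th CCT; have CCS := sw_CC HE HS.
  have le1: cc_le Th S by rewrite /cc_le (Ext_sw HS).
  have le2 := Hmax S CCS le1; rewrite /cc_le (Ext_sw HS) in le2.
  suff ->: Th = S by [].
  apply/eqP; rewrite eqEsubset; apply/andP; split.
    apply/subsetP => h hT; exact: (subsetP le2 _ (Ext_self hT)).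
  apply/subsetP => s sS; have: s \in Ext Th := subsetP sub _ sS.
  case/ExtP => F [sFT nF cF J].
  have sFS: F \subset S.
    apply/subsetP => f fF; exact: (subsetP le2 _ (Ext_self (subsetP sFT _ fF))).
  exact: (subsetP sFT _ (chain_join (sw_chainP HS) sFS nF cF J)).
move=> HS; split; first exact: sw_CC.
move=> Th' CC' le; rewrite /cc_le (Ext_sw HS) in le *.
have [S' [HS' sub']] := Bld Th' CC'.
have E' := sw_anti HS' HS (subset_trans sub' le); by rewrite -E'.
Qed.

End Proofs.

Theorem theorem5 (E T : finType) (I : E -> {set T}) :
  0 < #|E| ->
  (forall w, I w != set0) ->
  forall Th : {set pfun E T},
    maximal_CC I Th <-> cswitch I [set: E] Th.
Proof.
move=> HE Hne Th; exact: (main_sec Hne HE Th).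
Qed.
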